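(* Let $(X\cup Y,\mathbf{d})$ be a finite metric space and let $\epsilon \in (0,\frac{1}{2})$. For every $x\in X$ let $N_x$ be an $\epsilon \cdot \mathbf{d}(x,Y)$-net of $B_Y(\pi_Y(x), \mathbf{d}(x,Y)/\epsilon)$ with $\pi_Y(x)\in N_x$. For all $x\in X$ and $y\in Y$ define $\widehat{\mathbf{d}}(x,y) = \min_{u\in N_x} \mathbf{d}(x,u) + \mathbf{d}(u,y)$. Then for all $x\in X$ and $y\in Y$, \[ \mathbf{d}(x,y) \le \widehat{\mathbf{d}}(x,y) \le (1+4 \epsilon) \cdot \mathbf{d}(x,y). \]
   Context: For $S\subseteq X\cup Y$, $x\in X\cup Y$ and $r>0$, $B_S(x,r)=\{y\in S:\mathbf{d}(x,y)\le r\}$. $\pi_S(x)$ denotes a point of $S$ closest to $x$, and $\mathbf{d}(x,S)=\mathbf{d}(x,\pi_S(x))$. For $\rho>0$, a $\rho$-net of a set $B$ is a subset $N\subseteq B$ such that any two distinct points of $N$ are at distance at least $\rho$ and every point of $B$ is within distance $\rho$ of some point of $N$. *)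

(* Defs.v *)
From mathcomp Require Import all_boot all_order all_algebra.
Set Implicit Arguments. Unset Strict Implicit. Unset Printing Implicit Defensive.
Import Order.TTheory GRing.Theory Num.Theory.
Local Open Scope ring_scope.

Definition is_metric (R : realFieldType) (T : finType) (d : T -> T -> R) : Prop :=
  [/\ forall x y, 0 <= d x y,
      forall x y, d x y = 0 <-> x = y,
      forall x y, d x y = d y x
    & forall x y z, d x z <= d x y + d y z].

Definition ballS (R : realFieldType) (T : finType) (d : T -> T -> R)
  (S : {set T}) (x : T) (r : R) : {set T} := [set y in S | d x y <= r].

Definition is_proj (R : realFieldType) (T : finType) (d : T -> T -> R)
  (S A : {set T}) (pi : T -> T) : Prop :=
  forall x, x \in A -> pi x \in S /\ (forall y, y \in S -> d x (pi x) <= d x y).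

Definition is_net (R : realFieldType) (T : finType) (d : T -> T -> R)
  (rho : R) (N B : {set T}) : Prop :=
  [/\ N \subset B,
      (forall u v, u \in N -> v \in N -> u != v -> rho <= d u v)
    & (forall b, b \in B -> exists2 u, u \in N & d b u <= rho)].

(* dhat(x,y) = min_{u in N x} d(x,u) + d(u,y).  The fold is seeded with the
   value at pi x, which belongs to N x by hypothesis, so this is exactly the
   minimum over N x. *)
Definition dhat (R : realFieldType) (T : finType) (d : T -> T -> R)
  (N : T -> {set T}) (pi : T -> T) (x y : T) : R :=
  \big[Order.min/ d x (pi x) + d (pi x) y]_(u in N x) (d x u + d u y).

(* Main.v *)
Require Import Defs.
From mathcomp Require Import all_boot all_order all_algebra.
From mathcomp Require Import lra.
Import Order.TTheory GRing.Theory Num.Theory.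
Local Open Scope ring_scope.

Lemma bigmin_le_term (R : realFieldType) (T : finType) (A : {set T}) (F : T -> R) (s : R) u :
  u \in A -> \big[Order.min/s]_(v in A) F v <= F u.
Proof. by move=> uA; rewrite (bigD1 u) //= ge_min lexx. Qed.

Theorem lemma1p6 (R : realFieldType) (T : finType) (d : T -> T -> R)
  (X Y : {set T}) (eps : R) (pi : T -> T) (N : T -> {set T}) :
  is_metric d ->
  0 < eps -> eps < 1 / 2 ->
  is_proj d Y X pi ->
  (forall x, x \in X ->
     is_net d (eps * d x (pi x)) (N x) (ballS d Y (pi x) (d x (pi x) / eps))
     /\ pi x \in N x) ->
  forall x y, x \in X -> y \in Y ->
    d x y <= dhat d N pi x y /\ dhat d N pi x y <= (1 + 4 * eps) * d x y.
Proof.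
move=> [d0 _ dsym dtri] e0 e2 hpi hN x y xX yY.
have [piY pimin] := hpi x xX.
have [[_ _ cov] piN] := hN x xX.
split.
  rewrite /dhat; apply: (big_ind (fun v => d x y <= v)).
  - exact: dtri.
  - by move=> a b ha hb; rewrite le_min ha hb.
  - by move=> u _; exact: dtri.
set r := d x (pi x).
have rle : r <= d x y by exact: pimin.
have r0 : 0 <= r by exact: d0.
have dxy0 : 0 <= d x y by exact: d0.
case: (leP (d (pi x) y) (r / eps)) => hb.
  have yB : y \in ballS d Y (pi x) (r / eps) by rewrite /ballS inE yY hb.
  have [u uN hu] := cov y yB.
  rewrite /dhat; apply: (le_trans (@bigmin_le_term R T (N x) (fun v => d x v + d v y) (d x (pi x) + d (pi x) y) _ uN)).
  have h1 := dtri x y u.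
  have h2 : d u y = d y u by apply: dsym.
  have h6 : 4 * eps * d x y = 4 * (eps * d x y) by rewrite mulrA.
  have h3 : eps * r <= eps * d x y by rewrite ler_wpM2l // ltW.
  have h4 : 0 <= eps * d x y by rewrite mulr_ge0 // ltW.
  rewrite mulrDl mul1r h6. rewrite -/r in hu; lra.
rewrite /dhat; apply: (le_trans (@bigmin_le_term R T (N x) (fun v => d x v + d v y) (d x (pi x) + d (pi x) y) _ piN)).
have h1 := dtri (pi x) x y.
have h2 : d (pi x) x = r by rewrite /r dsym.
have h3 : r < eps * d (pi x) y.
  by rewrite -ltr_pdivrMl // mulrC.
have h4 : eps * d (pi x) y <= eps * (r + d x y) by apply: ler_wpM2l; [exact: ltW | rewrite -h2; exact: h1].
have h5 : eps * r <= 1/2 * r by rewrite ler_wpM2r // ltW.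
rewrite mulrDr in h4.
rewrite mulrDl mul1r -/r.
have h6 : 4 * eps * d x y = 4 * (eps * d x y) by rewrite mulrA.
rewrite h6; lra.
Qed.
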